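(* Let $B$ be a semiring and let $(A,B,p',s')$, $(D,B,p,s)$, $(C,B,p'',s'')$ be Schreier split epimorphisms of semirings. Let $f\colon A\to D$ and $g\colon C\to D$ be semiring homomorphisms with $pf=p'$, $fs'=s$, $pg=p''$, $gs''=s$. Let $H=\mathrm{Ker}(p')$, $K=\mathrm{Ker}(p)$, $L=\mathrm{Ker}(p'')$, and let $f|_H\colon H\to K$, $g|_L\colon L\to K$ be the restrictions. If $D$ is generated as a semiring by $f(A)\cup g(C)$, then $K$ is generated as a semiring by $f(H)\cup g(L)$. Consequently the kernel functor $\mathrm{Ker}_B\colon SPt_B(\mathsf{SRng})\to\mathsf{SRng}$ preserves jointly strongly epimorphic pairs.
   Context: A semiring is a set with a commutative monoid structure $(+,0)$ and an associative (not necessarily unital) multiplication distributing over $+$ on both sides, with $0x=x0=0$. A split epimorphism $(A,B,f,s)$ of semirings ($fs=1_B$) is Schreier if each $a\in A$ can be written uniquely as $a=\alpha+sf(a)$ with $f(\alpha)=0$. $SPt_B(\mathsf{SRng})$ is the category of Schreier split epimorphisms with codomain $B$, morphisms commuting with the projections and sections. $\mathrm{Ker}_B$ sends such a point to the kernel $f^{-1}(0)$. A pair of morphisms with common codomain is jointly strongly epimorphic if whenever both factor through a monomorphism $m$, $m$ is an isomorphism. *)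

(* Defs.v *)
(* a bespoke (non-unital) semiring structure, since MathComp's
   semiring structures are unital. *)
From Stdlib Require Import ProofIrrelevance.
Set Implicit Arguments.
Unset Strict Implicit.

Record Semiring := {
  car :> Type;
  sadd : car -> car -> car;
  szero : car;
  smul : car -> car -> car;
  saddA : forall x y z, sadd x (sadd y z) = sadd (sadd x y) z;
  saddC : forall x y, sadd x y = sadd y x;
  sadd0 : forall x, sadd szero x = x;
  smulA : forall x y z, smul x (smul y z) = smul (smul x y) z;
  smulDl : forall x y z, smul (sadd x y) z = sadd (smul x z) (smul y z);
  smulDr : forall x y z, smul x (sadd y z) = sadd (smul x y) (smul x z);
  smul0l : forall x, smul szero x = szero;
  smul0r : forall x, smul x szero = szero }.

Arguments sadd {_} _ _.
Arguments szero {_}.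
Arguments smul {_} _ _.

Record hom (R S : Semiring) := {
  hfun :> R -> S;
  hom_add : forall x y, hfun (sadd x y) = sadd (hfun x) (hfun y);
  hom_zero : hfun szero = szero;
  hom_mul : forall x y, hfun (smul x y) = smul (hfun x) (hfun y) }.

Inductive gen (R : Semiring) (X : R -> Prop) : R -> Prop :=
| gen_in : forall x, X x -> gen X x
| gen_zero : gen X szero
| gen_add : forall x y, gen X x -> gen X y -> gen X (sadd x y)
| gen_mul : forall x y, gen X x -> gen X y -> gen X (smul x y).

Record Point (B : Semiring) := {
  pcar : Semiring;
  proj : hom pcar B;
  sect : hom B pcar;
  proj_sect : forall b, proj (sect b) = b;
  schreier : forall a : pcar,
      exists! alpha : pcar, proj alpha = szero /\ a = sadd alpha (sect (proj a)) }.

Record pmor (B : Semiring) (X Y : Point B) := {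
  pm :> hom (pcar X) (pcar Y);
  pm_proj : forall a, proj Y (pm a) = proj X a;
  pm_sect : forall b, pm (sect X b) = sect Y b }.

Lemma sig_eq (A : Type) (P : A -> Prop) (x y : sig P) :
  proj1_sig x = proj1_sig y -> x = y.
Proof.
  destruct x as [x px], y as [y py]; simpl; intros ->.
  f_equal; apply proof_irrelevance.
Qed.

Section Kernel.
Variable B : Semiring.
Variable X : Point B.

Definition kcar := { a : pcar X | proj X a = szero }.

Lemma kadd_proof (a b : kcar) :
  proj X (sadd (proj1_sig a) (proj1_sig b)) = szero.
Proof.
  destruct a as [a pa], b as [b pb]; simpl.
  rewrite hom_add, pa, pb; apply sadd0.
Qed.
Definition kadd (a b : kcar) : kcar := exist _ _ (kadd_proof a b).

Lemma kmul_proof (a b : kcar) :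
  proj X (smul (proj1_sig a) (proj1_sig b)) = szero.
Proof.
  destruct a as [a pa], b as [b pb]; simpl.
  rewrite hom_mul, pa, pb; apply smul0l.
Qed.
Definition kmul (a b : kcar) : kcar := exist _ _ (kmul_proof a b).

Definition kzero : kcar := exist _ szero (hom_zero (proj X)).

Definition KerS : Semiring.
Proof.
  refine (@Build_Semiring kcar kadd kzero kmul _ _ _ _ _ _ _ _);
    intros; apply sig_eq; simpl.
  - apply saddA.
  - apply saddC.
  - apply sadd0.
  - apply smulA.
  - apply smulDl.
  - apply smulDr.
  - apply smul0l.
  - apply smul0r.
Defined.
End Kernel.

Section KerMap.
Variable B : Semiring.
Variables X Y : Point B.
Variable f : pmor X Y.

Lemma kmap_proof (h : KerS X) : proj Y (f (proj1_sig h)) = szero.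
Proof. rewrite pm_proj; exact (proj2_sig h). Qed.

Definition kmap_fun (h : KerS X) : KerS Y := exist _ _ (kmap_proof h).

Definition Kmap : hom (KerS X) (KerS Y).
Proof.
  refine (@Build_hom (KerS X) (KerS Y) kmap_fun _ _ _);
    intros; apply sig_eq; simpl.
  - apply hom_add.
  - apply hom_zero.
  - apply hom_mul.
Defined.
End KerMap.

Definition mono_SR (N M : Semiring) (m : hom N M) : Prop :=
  forall (Z : Semiring) (h1 h2 : hom Z N),
    (forall z, m (h1 z) = m (h2 z)) -> forall z, h1 z = h2 z.

Definition iso_SR (N M : Semiring) (m : hom N M) : Prop :=
  exists m' : hom M N, (forall x, m' (m x) = x) /\ (forall y, m (m' y) = y).

Definition jse_SR (X Y M : Semiring) (u : hom X M) (v : hom Y M) : Prop :=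
  forall (N : Semiring) (m : hom N M), mono_SR m ->
  forall (u' : hom X N) (v' : hom Y N),
    (forall x, m (u' x) = u x) -> (forall y, m (v' y) = v y) -> iso_SR m.

Definition mono_Pt (B : Semiring) (N M : Point B) (m : pmor N M) : Prop :=
  forall (Z : Point B) (h1 h2 : pmor Z N),
    (forall z, m (h1 z) = m (h2 z)) -> forall z, h1 z = h2 z.

Definition iso_Pt (B : Semiring) (N M : Point B) (m : pmor N M) : Prop :=
  exists m' : pmor M N, (forall x, m' (m x) = x) /\ (forall y, m (m' y) = y).

Definition jse_Pt (B : Semiring) (X Y M : Point B) (u : pmor X M) (v : pmor Y M)
  : Prop :=
  forall (N : Point B) (m : pmor N M), mono_Pt m ->
  forall (u' : pmor X N) (v' : pmor Y N),
    (forall x, m (u' x) = u x) -> (forall y, m (v' y) = v y) -> iso_Pt m.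

Definition KerB_preserves_jse (B : Semiring) : Prop :=
  forall (X Y M : Point B) (u : pmor X M) (v : pmor Y M),
    jse_Pt u v -> jse_SR (Kmap u) (Kmap v).

(* Main.v *)
Require Import Defs.
From Stdlib Require Import ProofIrrelevance ClassicalEpsilon.

Lemma add4 (R : Semiring) (a b c d : R) :
  sadd (sadd a b) (sadd c d) = sadd (sadd a c) (sadd b d).
Proof.
  rewrite <- !saddA. f_equal. rewrite !saddA. f_equal. apply saddC.
Qed.

Section RM.
Variable B : Semiring.
Variable X : Point B.
Lemma rmulK_proof (x : KerS X) (b : B) :
  proj X (smul (proj1_sig x) (sect X b)) = szero.
Proof. rewrite hom_mul, proj_sect, (proj2_sig x). apply smul0l. Qed.
Definition rmulK (x : KerS X) (b : B) : KerS X := exist _ _ (rmulK_proof x b).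
Lemma lmulK_proof (b : B) (x : KerS X) :
  proj X (smul (sect X b) (proj1_sig x)) = szero.
Proof. rewrite hom_mul, proj_sect, (proj2_sig x). apply smul0r. Qed.
Definition lmulK (b : B) (x : KerS X) : KerS X := exist _ _ (lmulK_proof b x).
End RM.
Arguments rmulK {B X}.
Arguments lmulK {B X}.

Section Core.
Variables (B : Semiring) (A D C : Point B) (f : pmor A D) (g : pmor C D).

Definition GP := (fun y : KerS D => (exists h, Kmap f h = y) \/ (exists l, Kmap g l = y)).

Lemma G_mulK (x : KerS D) : gen GP x -> forall b,
  gen GP (rmulK x b) /\ gen GP (lmulK b x).
Proof.
  induction 1 as [x Hx | | x y _ IHx _ IHy | x y Hx IHx Hy IHy]; intro b.
  - destruct Hx as [[h <-] | [l <-]]; split.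
    + replace (rmulK (Kmap f h) b) with (Kmap f (rmulK h b)).
      * apply gen_in; left; eauto.
      * apply sig_eq; simpl. rewrite hom_mul, pm_sect. reflexivity.
    + replace (lmulK b (Kmap f h)) with (Kmap f (lmulK b h)).
      * apply gen_in; left; eauto.
      * apply sig_eq; simpl. rewrite hom_mul, pm_sect. reflexivity.
    + replace (rmulK (Kmap g l) b) with (Kmap g (rmulK l b)).
      * apply gen_in; right; eauto.
      * apply sig_eq; simpl. rewrite hom_mul, pm_sect. reflexivity.
    + replace (lmulK b (Kmap g l)) with (Kmap g (lmulK b l)).
      * apply gen_in; right; eauto.
      * apply sig_eq; simpl. rewrite hom_mul, pm_sect. reflexivity.
  - split.
    + replace (rmulK szero b) with (szero : KerS D).
      * apply gen_zero.
      * apply sig_eq; simpl. symmetry; apply smul0l.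
    + replace (lmulK b szero) with (szero : KerS D).
      * apply gen_zero.
      * apply sig_eq; simpl. symmetry; apply smul0r.
  - destruct (IHx b) as [Hx1 Hx2]; destruct (IHy b) as [Hy1 Hy2]; split.
    + replace (rmulK (sadd x y) b) with (sadd (rmulK x b) (rmulK y b)).
      * apply gen_add; auto.
      * apply sig_eq; simpl. symmetry; apply smulDl.
    + replace (lmulK b (sadd x y)) with (sadd (lmulK b x) (lmulK b y)).
      * apply gen_add; auto.
      * apply sig_eq; simpl. symmetry; apply smulDr.
  - destruct (IHx b) as [Hx1 Hx2]; destruct (IHy b) as [Hy1 Hy2]; split.
    + replace (rmulK (smul x y) b) with (smul x (rmulK y b)).
      * apply gen_mul; auto.
      * apply sig_eq; simpl. apply smulA.
    + replace (lmulK b (smul x y)) with (smul (lmulK b x) y).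
      * apply gen_mul; auto.
      * apply sig_eq; simpl. symmetry; apply smulA.
Qed.

Lemma core (d : pcar D) :
  gen (fun x : pcar D => (exists a, f a = x) \/ (exists c, g c = x)) d ->
  exists k : KerS D, gen GP k /\ d = sadd (proj1_sig k) (sect D (proj D d)).
Proof.
  induction 1 as [x Hx | | x y _ IHx _ IHy | x y _ IHx _ IHy].
  - destruct Hx as [[a <-] | [c <-]].
    + destruct (schreier (p:=A) a) as [al [[pa Ea] _]].
      exists (Kmap f (exist _ al pa)). split.
      * apply gen_in; left; eauto.
      * simpl. rewrite (pm_proj f), <- (pm_sect f), <- hom_add. f_equal; exact Ea.
    + destruct (schreier (p:=C) c) as [al [[pa Ea] _]].
      exists (Kmap g (exist _ al pa)). split.
      * apply gen_in; right; eauto.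
      * simpl. rewrite (pm_proj g), <- (pm_sect g), <- hom_add. f_equal; exact Ea.
  - exists szero. split; [apply gen_zero|]. simpl.
    rewrite (hom_zero (proj D)), (hom_zero (sect D)), sadd0. reflexivity.
  - destruct IHx as [k1 [G1 E1]]; destruct IHy as [k2 [G2 E2]].
    exists (sadd k1 k2). split; [apply gen_add; auto|].
    rewrite (hom_add (proj D)), (hom_add (sect D)).
    remember (proj D x) as b1. remember (proj D y) as b2.
    rewrite E1, E2 at 1. simpl. apply add4.
  - destruct IHx as [k1 [G1 E1]]; destruct IHy as [k2 [G2 E2]].
    remember (proj D x) as b1. remember (proj D y) as b2.
    exists (sadd (sadd (smul k1 k2) (rmulK k1 b2)) (lmulK b1 k2)).
    destruct (G_mulK _ G1 b2) as [H1 _]. destruct (G_mulK _ G2 b1) as [_ H2].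
    split; [repeat apply gen_add; auto; apply gen_mul; auto|].
    rewrite (hom_mul (proj D)), <- Heqb1, <- Heqb2, (hom_mul (sect D)).
    rewrite E1, E2 at 1. simpl.
    rewrite smulDl, !smulDr. apply saddA.
Qed.

Lemma part1 :
     (forall d : pcar D,
        gen (fun x : pcar D => (exists a, f a = x) \/ (exists c, g c = x)) d) ->
     forall k : KerS D,
        gen (fun y : KerS D => (exists h, Kmap f h = y) \/ (exists l, Kmap g l = y)) k.
Proof.
  intros Hd k. destruct (core _ (Hd (proj1_sig k))) as [k' [Gk E]].
  replace k with k'; [exact Gk|].
  apply sig_eq. rewrite E. rewrite (proj2_sig k), (hom_zero (sect D)).
  rewrite saddC, sadd0. reflexivity.
Qed.
End Core.

Arguments GP {B A D C} f g _.
Arguments G_mulK {B A D C} f g x _ b.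
Arguments core {B A D C} f g d _.
Arguments part1 {B A D C} f g _ k.

Section KP.
Variables (N M : Semiring) (m : hom N M).
Definition kpcar := { p : N * N | m (fst p) = m (snd p) }.
Lemma kpadd_proof (x y : kpcar) :
  m (fst (sadd (fst (proj1_sig x)) (fst (proj1_sig y)),
          sadd (snd (proj1_sig x)) (snd (proj1_sig y))))
  = m (snd (sadd (fst (proj1_sig x)) (fst (proj1_sig y)),
          sadd (snd (proj1_sig x)) (snd (proj1_sig y)))).
Proof. simpl. rewrite !hom_add, (proj2_sig x), (proj2_sig y). reflexivity. Qed.
Definition kpadd (x y : kpcar) : kpcar := exist _ _ (kpadd_proof x y).
Lemma kpmul_proof (x y : kpcar) :
  m (fst (smul (fst (proj1_sig x)) (fst (proj1_sig y)),
          smul (snd (proj1_sig x)) (snd (proj1_sig y))))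
  = m (snd (smul (fst (proj1_sig x)) (fst (proj1_sig y)),
          smul (snd (proj1_sig x)) (snd (proj1_sig y)))).
Proof. simpl. rewrite !hom_mul, (proj2_sig x), (proj2_sig y). reflexivity. Qed.
Definition kpmul (x y : kpcar) : kpcar := exist _ _ (kpmul_proof x y).
Lemma kpzero_proof : m (fst (@szero N, @szero N)) = m (snd (@szero N, @szero N)).
Proof. reflexivity. Qed.
Definition kpzero : kpcar := exist _ _ kpzero_proof.
Definition KP : Semiring.
Proof.
  refine (@Build_Semiring kpcar kpadd kpzero kpmul _ _ _ _ _ _ _ _);
    intros; apply sig_eq; apply injective_projections; simpl.
  all: first [apply saddA | apply saddC | apply sadd0 | apply smulA
             | apply smulDl | apply smulDr | apply smul0l | apply smul0r].
Defined.
Definition kp1 : hom KP N.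
Proof.
  refine (@Build_hom KP N (fun z => fst (proj1_sig z)) _ _ _); reflexivity.
Defined.
Definition kp2 : hom KP N.
Proof.
  refine (@Build_hom KP N (fun z => snd (proj1_sig z)) _ _ _); reflexivity.
Defined.
Lemma mono_inj : mono_SR m -> forall x y, m x = m y -> x = y.
Proof.
  intros Hm x y E.
  exact (Hm KP kp1 kp2 (fun z => proj2_sig z) (exist _ (x, y) E)).
Qed.
End KP.

Section Sub.
Variables (B : Semiring) (X Y M : Point B) (u : pmor X M) (v : pmor Y M).
Definition Pm := fun x : pcar M => (exists a, u a = x) \/ (exists c, v c = x).
Definition scar := { a : pcar M | gen Pm a }.
Definition sadd' (a b : scar) : scar :=
  exist _ _ (gen_add (proj2_sig a) (proj2_sig b)).
Definition smul' (a b : scar) : scar :=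
  exist _ _ (gen_mul (proj2_sig a) (proj2_sig b)).
Definition szero' : scar := exist _ _ (gen_zero Pm).
Definition SubS : Semiring.
Proof.
  refine (@Build_Semiring scar sadd' szero' smul' _ _ _ _ _ _ _ _);
    intros; apply sig_eq; simpl.
  all: first [apply saddA | apply saddC | apply sadd0 | apply smulA
             | apply smulDl | apply smulDr | apply smul0l | apply smul0r].
Defined.
Definition sincl : hom SubS (pcar M).
Proof. refine (@Build_hom SubS (pcar M) (fun a => proj1_sig a) _ _ _); reflexivity. Defined.
Definition sproj : hom SubS B.
Proof.
  refine (@Build_hom SubS B (fun a => proj M (proj1_sig a)) _ _ _); intros; simpl.
  - apply hom_add. - apply hom_zero. - apply hom_mul.
Defined.
Lemma ssect_proof (b : B) : gen Pm (sect M b).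
Proof. apply gen_in; left; exists (sect X b); apply pm_sect. Qed.
Definition ssect : hom B SubS.
Proof.
  refine (@Build_hom B SubS (fun b => exist _ _ (ssect_proof b)) _ _ _);
    intros; apply sig_eq; simpl.
  - apply hom_add. - apply hom_zero. - apply hom_mul.
Defined.

Lemma Gsub (k : KerS M) : gen (GP u v) k -> gen Pm (proj1_sig k).
Proof.
  induction 1 as [x Hx | | x y _ IHx _ IHy | x y _ IHx _ IHy].
  - destruct Hx as [[h <-] | [l <-]]; apply gen_in; [left|right]; eexists; reflexivity.
  - apply gen_zero.
  - apply gen_add; auto.
  - apply gen_mul; auto.
Qed.

Definition SubP : Point B.
Proof.
  refine (@Build_Point B SubS sproj ssect _ _).
  - intro b; simpl; apply proj_sect.
  - intro a. destruct (core u v _ (proj2_sig a)) as [k [Gk E]].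
    exists (exist _ (proj1_sig k) (Gsub _ Gk)). split.
    + split.
      * simpl. exact (proj2_sig k).
      * apply sig_eq. simpl. exact E.
    + intros a' [Pa' Ea'].
      destruct (schreier (p:=M) (proj1_sig a)) as [al [_ U]].
      apply sig_eq. simpl.
      transitivity al.
      * symmetry. apply U. split; [exact (proj2_sig k) | exact E].
      * apply U. split; [exact Pa'|]. 
        change (proj1_sig a = proj1_sig (sadd a' (ssect (sproj a)))).
        rewrite <- Ea'. reflexivity.
Defined.

Definition inclP : pmor SubP M.
Proof.
  refine (@Build_pmor B SubP M sincl _ _); intros; reflexivity.
Defined.

Definition uS : pmor X SubP.
Proof.
  unshelve refine (@Build_pmor B X SubP _ _ _).
  - refine (@Build_hom (pcar X) SubS
      (fun a => exist _ (u a) (gen_in (or_introl (ex_intro _ a eq_refl)))) _ _ _);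
      intros; apply sig_eq; simpl.
    + apply hom_add. + apply hom_zero. + apply hom_mul.
  - intro a; simpl; apply pm_proj.
  - intro b; apply sig_eq; simpl; apply pm_sect.
Defined.
Definition vS : pmor Y SubP.
Proof.
  unshelve refine (@Build_pmor B Y SubP _ _ _).
  - refine (@Build_hom (pcar Y) SubS
      (fun a => exist _ (v a) (gen_in (or_intror (ex_intro _ a eq_refl)))) _ _ _);
      intros; apply sig_eq; simpl.
    + apply hom_add. + apply hom_zero. + apply hom_mul.
  - intro a; simpl; apply pm_proj.
  - intro b; apply sig_eq; simpl; apply pm_sect.
Defined.

Lemma all_gen : jse_Pt u v -> forall y : pcar M, gen Pm y.
Proof.
  intros H y.
  assert (Hmono : mono_Pt inclP).
  { intros Z h1 h2 E z. apply sig_eq. exact (E z). }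
  destruct (H SubP inclP Hmono uS vS (fun _ => eq_refl) (fun _ => eq_refl))
    as [m' [_ H2]].
  rewrite <- (H2 y). exact (proj2_sig (m' y)).
Qed.
End Sub.

Lemma part2 (B : Semiring) : KerB_preserves_jse B.
Proof.
  intros X Y M u v Hj N m Hm u' v' Hu' Hv'.
  assert (HG : forall k : KerS M, gen (GP u v) k)
    by exact (part1 u v (all_gen _ _ _ _ u v Hj)).
  assert (Hs : forall k, exists n, m n = k).
  { intro k. induction (HG k) as [x Hx | | x y _ IHx _ IHy | x y _ IHx _ IHy].
    - destruct Hx as [[h <-] | [l <-]]; eauto.
    - exists szero; apply hom_zero.
    - destruct IHx as [a <-]; destruct IHy as [b <-]; exists (sadd a b); apply hom_add.
    - destruct IHx as [a <-]; destruct IHy as [b <-]; exists (smul a b); apply hom_mul. }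
  pose proof (mono_inj _ _ m Hm) as Hi.
  set (mi := fun y => proj1_sig (constructive_indefinite_description _ (Hs y))).
  assert (Hmi : forall y, m (mi y) = y).
  { intro y. unfold mi. destruct (constructive_indefinite_description _ (Hs y)); auto. }
  unshelve eexists.
  - refine (@Build_hom _ _ mi _ _ _); intros; apply Hi.
    + rewrite hom_add, !Hmi. reflexivity.
    + rewrite hom_zero, !Hmi. reflexivity.
    + rewrite hom_mul, !Hmi. reflexivity.
  - simpl. split; [intro x; apply Hi; apply Hmi | exact Hmi].
Qed.

Theorem mainTheorem6 (B : Semiring) :
  (forall (A D C : Point B) (f : pmor A D) (g : pmor C D),
     (forall d : pcar D,
        gen (fun x : pcar D => (exists a, f a = x) \/ (exists c, g c = x)) d) ->
     forall k : KerS D,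
        gen (fun y : KerS D => (exists h, Kmap f h = y) \/ (exists l, Kmap g l = y)) k)
  /\ KerB_preserves_jse B.
Proof.
  split.
  - intros A D C f g Hd k. exact (part1 f g Hd k).
  - apply part2.
Qed.
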